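(* Let $X=(\mathbb{R}/\mathbb{Z})^2$ with Lebesgue measure $\mu$, let $f\colon X\to X$ be $f(x,y)=(x+y,y)$, and let $\varphi\colon X\to\mathbb{C}$ be $\varphi(x,y)=e(x)$, where $e(z)=\exp(2\pi i z)$. Let $(a_p)$ be a sequence indexed by the primes, with $a_p$ an integer, $0\leq a_p<p$, such that for almost every $y\in[0,1]$ the set of primes $p$ with $|y-a_p/p|\leq 1/(2p)$ is infinite. For each prime $p$ and $n\in\mathbb{Z}$ let $t_p(n)=e(-na_p/p)$, and define $s_p\colon X\to\mathbb{C}$ by $$s_p(x,y)=\frac{1}{p}\sum_{0\leq n<p}t_p(n)\,\varphi(f^n(x,y)).$$ Then: (1) the sequence $(s_p)$ does not converge $\mu$-almost everywhere as $p\to+\infty$; (2) if $\mathsf{P}$ is an infinite set of primes such that $\sum_{p\in\mathsf{P}}\frac{\log p}{p}<+\infty$, then the sequence $(s_p)_{p\in\mathsf{P}}$ converges $\mu$-almost everywhere to $0$.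
   Context: Such sequences $(a_p)$ exist (the paper chooses one via its main theorem with $c=1/2$); the proposition is stated for any such sequence. *)

(* Defs.v *)
From HB Require Import structures.
From mathcomp Require Import all_boot all_order all_algebra.
From mathcomp Require Import all_classical all_reals all_analysis.
From mathcomp Require Import complex.
Set Implicit Arguments. Unset Strict Implicit. Unset Printing Implicit Defensive.
Import Order.TTheory GRing.Theory Num.Theory.
Local Open Scope classical_set_scope.
Local Open Scope ring_scope.

Section Defs.
Variable R : realType.

Definition ee (z : R) : R[i] := (cos (2 * pi * z) +i* sin (2 * pi * z))%C.

(* The torus (R/Z)^2 is represented by the fundamental domain [0,1)^2 in R*R;
   all functions below are 1-periodic lifts. *)
Definition f (z : R * R) : R * R := (z.1 + z.2, z.2).

Definition phi (z : R * R) : R[i] := ee z.1.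

Definition t (a : nat -> nat) (p : nat) (n : nat) : R[i] :=
  ee (- (n%:R * (a p)%:R / p%:R)).

Definition s (a : nat -> nat) (p : nat) (z : R * R) : R[i] :=
  ((p%:R^-1)%:C)%C * \sum_(0 <= n < p) t a p n * phi (iter n f z).

Definition torus : set (R * R) := `[0, 1[%classic `*` `[0, 1[%classic.

Definition cvg_along (P : set nat) (u : nat -> R[i]) (l : R[i]) : Prop :=
  forall eps : R, 0 < eps ->
    exists N : nat, forall p : nat, P p -> (N <= p)%N -> ComplexField.Normc.normc (u p - l) < eps.

Definition converges_along (P : set nat) (u : nat -> R[i]) : Prop :=
  exists l : R[i], cvg_along P u l.

Definition primes_set : set nat := [set p | prime p].

End Defs.

Definition mu2 (R : realType) := ((@lebesgue_measure R) \x (@lebesgue_measure R))%E.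

(* Main.v *)
Require Import Defs.
From HB Require Import structures.
From mathcomp Require Import all_boot all_order all_algebra.
From mathcomp Require Import all_classical all_reals all_analysis.
From mathcomp Require Import complex.
From mathcomp Require Import ring lra measurable_realfun.
Import Order.TTheory GRing.Theory Num.Theory.
Local Open Scope classical_set_scope.
Local Open Scope ring_scope.

Import numFieldNormedType.Exports.

Section Trig.
Variable R : realType.

Lemma ndecr_from_deriv (g dg : R -> R) :
  (forall x : R, is_derive x 1 g (dg x)) -> (forall x, 0 < x -> 0 <= dg x) ->
  forall v, 0 <= v -> g 0 <= g v.
Proof.
move=> hd hpos v v0.
apply: (@ger0_derive1_ndecry R g 0) => //.
- move=> x; rewrite in_itv /= andbT => x0.
  by rewrite derive1E (@derive_val _ _ _ _ _ _ _ (hd x)); apply: hpos.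
- apply: continuous_subspaceT => x.
  exact/differentiable_continuous/derivable1_diffP/(@ex_derive _ _ _ _ _ _ _ (hd x)).
Qed.

Lemma sin_le_id (v : R) : 0 <= v -> sin v <= v.
Proof.
move=> v0.
have := @ndecr_from_deriv (fun x => x - sin x) (fun x => 1 - cos x) _ _ v v0.
rewrite sin0 subr0 subr_ge0; apply => //.
Qed.

Lemma cos_ge_quad (v : R) : 1 - v ^+ 2 / 2 <= cos v.
Proof.
wlog v0 : v / 0 <= v.
  move=> H; case: (leP 0 v) => [/H//|v0].
  by rewrite -cosN -sqrrN H // oppr_ge0 ltW.
have := @ndecr_from_deriv (fun x => cos x - 1 + x ^+ 2 / 2) (fun x => - sin x + x) _ _ v v0.
rewrite cos0 subrr expr0n /= mul0r addr0.
have -> : cos v - 1 + v ^+ 2 / 2 = cos v - (1 - v ^+ 2 / 2) by ring.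
rewrite subr_ge0; apply.
- move=> x; apply: is_derive_eq.
  rewrite !scaler0 subr0 add0r; congr (_ + _). by rewrite /GRing.scale /= mulr1; lra.

- by move=> x x0; rewrite addrC subr_ge0 sin_le_id // ltW.
Qed.

End Trig.

Section Trig2.
Variable R : realType.

Lemma sin_ge_cubic (v : R) : 0 <= v -> v - v ^+ 3 / 6 <= sin v.
Proof.
move=> v0.
have := @ndecr_from_deriv R (fun x => sin x - x + x ^+ 3 / 6) (fun x => cos x - 1 + x ^+ 2 / 2) _ _ v v0.
rewrite sin0 subrr expr0n /= mul0r addr0.
have -> : sin v - v + v ^+ 3 / 6 = sin v - (v - v ^+ 3 / 6) by ring.
rewrite subr_ge0; apply.
- move=> x; apply: is_derive_eq.
  by rewrite /GRing.scale /=; field.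
- move=> x _; have := @cos_ge_quad R x; lra.
Qed.

End Trig2.

Section Trig3.
Variable R : realType.

Lemma sin_ge_third (v : R) : 0 <= v <= 2 -> v / 3 <= sin v.
Proof.
move=> /andP[v0 v2]; have := @sin_ge_cubic R v v0.
suff : v / 3 <= v - v ^+ 3 / 6 by lra.
have : v ^+ 3 = v * (v * v) by rewrite !exprS expr0 mulr1.
move=> ->; nra.
Qed.

Lemma one_minus_cos_lower (t : R) : `|t| <= pi -> t ^+ 2 / 18 <= 1 - cos t.
Proof.
wlog t0 : t / 0 <= t.
  move=> H; case: (leP 0 t) => [/H//|t0].
  by rewrite -cosN -sqrrN -normrN; apply: H; rewrite oppr_ge0 ltW.
rewrite ger0_norm // => tpi.
have -> : t = (t / 2) *+ 2 by rewrite -mulr_natr mulfVK ?pnatr_eq0.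
rewrite cos_mulr2n cos2sin2.
set v := t / 2.
have v0 : 0 <= v by rewrite /v divr_ge0.
have v2 : v <= 2.
  have h : pi / 2 < 2 :> R := pihalf_lt2 R; rewrite /v.
  apply: ltW; apply: le_lt_trans h; rewrite ler_pM2r //.
have := @sin_ge_third v; rewrite v0 v2 /= => /(_ isT) h.
have h2 : (v / 3) ^+ 2 <= sin v ^+ 2.
  by rewrite lerXn2r // ?nnegrE ?divr_ge0 // (le_trans _ h) // divr_ge0.
rewrite -mulr_natr.
have e1 : (v * 2) ^+ 2 = 4 * (v ^+ 2) by ring.
have e2 : (v / 3) ^+ 2 = v ^+ 2 / 9 by field.
rewrite e1 mulr2n; rewrite e2 in h2; lra.
Qed.

Lemma one_minus_cos_upper (t : R) : 1 - cos t <= t ^+ 2 / 2.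
Proof. have := @cos_ge_quad R t; lra. Qed.

End Trig3.

Section Cplx.
Variable R : realType.
Notation normc := (@ComplexField.Normc.normc R).

Lemma eeD (u v : R) : ee (u + v) = ee u * ee v.
Proof.
by rewrite /ee mulrDr cosD sinD /=; simpc; congr (_ +i* _)%C; rewrite addrC.
Qed.

Lemma ee0 : ee (0 : R) = 1.
Proof. by rewrite /ee mulr0 cos0 sin0. Qed.

Lemma eeX (n : nat) (u : R) : ee (n%:R * u) = ee u ^+ n.
Proof.
elim: n => [|n IH]; first by rewrite mul0r ee0 expr0.
by rewrite -addn1 natrD mulrDl mul1r eeD IH exprD expr1.
Qed.

Lemma ee1 : ee (1 : R) = 1.
Proof.
have h1 := cos2pi R; have h2 := sin2pi R.
rewrite -mulr_natl in h1 h2.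
by rewrite /ee mulr1 h1 h2.
Qed.

Lemma eeS1 (u : R) : ee (u + 1) = ee u.
Proof. by rewrite eeD ee1 mulr1. Qed.

Lemma eeB1 (u : R) : ee (u - 1) = ee u.
Proof. by rewrite -[in RHS](subrK 1 u) eeS1. Qed.

Lemma normc_ee (u : R) : normc (ee u) = 1.
Proof. by rewrite /ee /= (_ : _ + _ = 1) ?sqrtr1 //; exact: cos2Dsin2. Qed.

Lemma normc_ee_sub1 (u : R) : normc (ee u - 1) ^+ 2 = 2 * (1 - cos (2 * pi * u)).
Proof.
rewrite /ee /= sqr_sqrtr ?addr_ge0 ?sqr_ge0 //.
have h := cos2Dsin2 (2 * pi * u).
move: h; set c := cos _; set sn := sin _ => h.
rewrite subr0.
have -> : (c - 1) ^+ 2 + sn ^+ 2 = (c ^+ 2 + sn ^+ 2) + 1 - 2 * c by ring.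
rewrite h; ring.
Qed.

Lemma normc_ge0 (z : R[i]) : 0 <= normc z.
Proof. by case: z => a b /=; rewrite sqrtr_ge0. Qed.

Lemma normc_ee_sub1_ge (u : R) : `|u| <= 2^-1 -> `|u| <= normc (ee u - 1).
Proof.
move=> hu.
have hpi : 2 <= pi :> R := pi_ge2 R.
have ht : `|2 * pi * u| <= pi.
  rewrite normrM ger0_norm ?mulr_ge0 ?pi_ge0 //.
  have := pi_gt0 R; nra.
have h1 := @one_minus_cos_lower R _ ht.
have h2 := normc_ee_sub1 u.
rewrite -(@ler_pXn2r _ 2) ?nnegrE ?normc_ge0 // h2 real_normK ?num_real //.
have e : (2 * pi * u) ^+ 2 = 4 * pi ^+ 2 * u ^+ 2 by ring.
rewrite e in h1.
have h4 : 4 <= pi ^+ 2 :> R by nra.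
have := mulr_ge0 (eqbRL (subr_ge0 _ _) h4) (sqr_ge0 u).
have := sqr_ge0 u; lra.
Qed.

Lemma normc_ee_sub1_le (u : R) : normc (ee u - 1) <= 2 * pi * `|u|.
Proof.
have h1 := @one_minus_cos_upper R (2 * pi * u).
have h2 := normc_ee_sub1 u.
rewrite -(@ler_pXn2r _ 2) ?nnegrE ?normc_ge0 ?mulr_ge0 ?pi_ge0 // h2.
have e : (2 * pi * `|u|) ^+ 2 = (2 * pi * u) ^+ 2.
  by rewrite !exprMn real_normK ?num_real.
rewrite e; lra.
Qed.

Lemma geom_ee (th : R) (p : nat) :
  (ee th - 1) * (\sum_(0 <= n < p) ee th ^+ n) = ee (p%:R * th) - 1.
Proof. by rewrite eeX subrX1 big_mkord. Qed.

Lemma iter_f (n : nat) (z : R * R) : iter n (@f R) z = (z.1 + n%:R * z.2, z.2).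
Proof.
elim: n => [|n IH]; first by rewrite /= mul0r addr0; case: z.
by rewrite iterS IH /f /= -addn1 natrD mulrDl mul1r addrA.
Qed.

Lemma s_eq (a : nat -> nat) (p : nat) (z : R * R) :
  s a p z = (p%:R^-1)%:C%C * ee z.1 *
     \sum_(0 <= n < p) ee (z.2 - (a p)%:R / p%:R) ^+ n.
Proof.
rewrite /s -mulrA; congr (_ * _); rewrite mulr_sumr; apply: eq_bigr => n _.
rewrite iter_f /phi /t /= -eeX -eeD -eeD; congr (ee _).
by ring.
Qed.

Lemma normc_real (x : R) : normc (x%:C)%C = `|x|.
Proof. by rewrite /= expr0n /= addr0 sqrtr_sqr. Qed.

Lemma normc_s (a : nat -> nat) (p : nat) (z : R * R) : (0 < p)%N ->
  normc (s a p z) = p%:R^-1 * normc (\sum_(0 <= n < p) ee (z.2 - (a p)%:R / p%:R) ^+ n).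
Proof.
move=> p0; rewrite s_eq !ComplexField.Normc.normcM normc_ee mulr1 normc_real.
by rewrite ger0_norm // invr_ge0 ler0n.
Qed.

Lemma normc_sub1_le2 (w : R[i]) : normc w = 1 -> normc (w - 1) <= 2.
Proof.
move=> hw; apply: le_trans (le_normcD _ _) _.
by rewrite normcN ComplexField.Normc.normc1 hw; lra.
Qed.

Lemma sum_upper (th d r : R) (p : nat) : 0 < r -> `|d| <= 2^-1 -> r <= `|d| ->
  ee d = ee th ->
  normc (\sum_(0 <= n < p) ee th ^+ n) <= 2 / r.
Proof.
move=> r0 hd rd hee.
have h1 := geom_ee th p.
have h2 : normc (ee th - 1) * normc (\sum_(0 <= n < p) ee th ^+ n) <= 2.
  by rewrite -ComplexField.Normc.normcM h1 normc_sub1_le2 // normc_ee.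
have h3 : r <= normc (ee th - 1) by rewrite -hee (le_trans rd) // normc_ee_sub1_ge.
have h4 := normc_ge0 (\sum_(0 <= n < p) ee th ^+ n).
rewrite ler_pdivlMr //; nra.
Qed.

Lemma sum_lower (th : R) (p : nat) : (0 < p)%N -> `|th| <= (2 * p%:R)^-1 ->
  p%:R / 8 <= normc (\sum_(0 <= n < p) ee th ^+ n).
Proof.
move=> p0 hth.
have pr0 : 0 < p%:R :> R by rewrite ltr0n.
have [->|th0] := eqVneq th 0.
  rewrite ee0 (eq_bigr (fun=> 1)) => [|n _]; last by rewrite expr1n.
  rewrite sumr_const_nat subn0 -[(1 : R[i]) *+ p](rmorph_nat (real_complex R)).
  rewrite /= expr0n /= addr0 sqrtr_sqr ger0_norm ?ler0n //; lra.
have hpos : 0 < `|th| by rewrite normr_gt0.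
have hpth : `|p%:R * th| <= 2^-1.
  rewrite normrM ger0_norm ?ler0n //.
  apply: (le_trans (ler_wpM2l (ltW pr0) hth)).
  by rewrite invfM mulrCA mulfV ?gt_eqF // mulr1.
have h1 := geom_ee th p.
have h2 : `|p%:R * th| <= normc (ee th - 1) * normc (\sum_(0 <= n < p) ee th ^+ n).
  by rewrite -ComplexField.Normc.normcM h1 normc_ee_sub1_ge.
have h3 := normc_ee_sub1_le th.
have h4 := normc_ge0 (\sum_(0 <= n < p) ee th ^+ n).
have h5 : pi < 4 :> R by have := pihalf_lt2 R; lra.
rewrite normrM ger0_norm ?ler0n // in h2.
set S := normc (\sum_(0 <= n < p) ee th ^+ n) in h2 h4 *.
set W := normc (ee th - 1) in h2 h3.
have h6 : W <= 8 * `|th|.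
  have := ltW (mulr_gt0 (eqbRL (subr_gt0 _ _) h5) hpos); lra.
have h7 : p%:R * `|th| <= 8 * `|th| * S by nra.
have h8 : p%:R <= 8 * S.
  by rewrite -(ler_pM2r hpos); lra.
lra.
Qed.

Lemma s_small (a : nat -> nat) (p : nat) (x y r : R) :
  (0 < p)%N -> (a p < p)%N -> 0 <= y < 1 -> 0 < r ->
  r <= `|y - (a p)%:R / p%:R| -> r <= `|y - ((a p)%:R / p%:R + 1)| ->
  r <= `|y - ((a p)%:R / p%:R - 1)| ->
  normc (s a p (x, y)) <= p%:R^-1 * (2 / r).
Proof.
move=> p0 ap hy r0 h0 h1 h2.
rewrite normc_s //= ler_wpM2l ?invr_ge0 ?ler0n //.
set c := (a p)%:R / p%:R in h0 h1 h2 *.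
have c0 : 0 <= c by rewrite /c divr_ge0 ?ler0n.
have c1 : c < 1.
  rewrite /c ltr_pdivrMr ?ltr0n // mul1r ltr_nat //.
move: hy => /andP[y0 y1].

case: (ltP (2^-1) (y - c)) => hA.
  apply: (@sum_upper (y - c) (y - c - 1) r p r0) => //.
  - rewrite ler_norml; apply/andP; split; lra.
  - by have -> : y - c - 1 = y - (c + 1) by ring.
  - by rewrite eeB1.
case: (ltP (y - c) (- 2^-1)) => hB.
  apply: (@sum_upper (y - c) (y - c + 1) r p r0) => //.
  - rewrite ler_norml; apply/andP; split; lra.
  - by have -> : y - c + 1 = y - (c - 1) by ring.
  - by rewrite eeS1.
apply: (@sum_upper (y - c) (y - c) r p r0) => //.
rewrite ler_norml; apply/andP; split; lra.
Qed.

Lemma s_big (a : nat -> nat) (p : nat) (x y : R) : (0 < p)%N ->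
  `|y - (a p)%:R / p%:R| <= (2 * p%:R)^-1 -> 8^-1 <= normc (s a p (x, y)).
Proof.
move=> p0 h; rewrite normc_s //=.
have := @sum_lower _ _ p0 h.
set S := normc _ => hS.
have pr0 : 0 < p%:R :> R by rewrite ltr0n.
have -> : (8 : R)^-1 = p%:R^-1 * (p%:R / 8) by field; rewrite gt_eqF.
by rewrite ler_wpM2l // invr_ge0 ltW.
Qed.

End Cplx.

Section Meas.
Variable R : realType.
Notation normc := (@ComplexField.Normc.normc R).
Notation leb := (@lebesgue_measure R).

Definition cc (a : nat -> nat) (p : nat) : R := (a p)%:R / p%:R.
Definition rr (m p : nat) : R := 4 * m.+1%:R / p%:R.
Definition BB (a : nat -> nat) (P : set nat) (m p : nat) : set R :=
  if p \in P then ball (cc a p) (rr m p) `|` ball (cc a p + 1) (rr m p)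
                  `|` ball (cc a p - 1) (rr m p)
  else set0.

Lemma BB_meas a P m p : measurable (BB a P m p).
Proof.
rewrite /BB; case: ifP => _ //.
by apply: measurableU; [apply: measurableU|]; apply: measurable_ball.
Qed.

Lemma BB_mu a P m p : p \in P -> (leb (BB a P m p) <= ((24 * m.+1%:R) * p%:R^-1)%:E)%E.
Proof.
move=> pP; rewrite /BB pP.
have r0 : 0 <= rr m p by rewrite /rr divr_ge0 ?mulr_ge0 ?ler0n.
apply: le_trans (measureU2 _ _ _) _; [apply: measurableU|..]; try apply: measurable_ball.
apply: le_trans (leeD (measureU2 _ _ _) (lexx _)) _; try apply: measurable_ball.
have e : forall x, leb (ball x (rr m p)) = ((rr m p) *+ 2)%:E.
  by move=> x; apply: lebesgue_measure_ball.
have le_e : forall x, (leb (ball x (rr m p)) <= ((rr m p) *+ 2)%:E)%E.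
  by move=> x; rewrite e.
apply: le_trans (leeD (leeD (le_e _) (le_e _)) (le_e _)) _.
rewrite -!EFinD lee_fin /rr; lra.
Qed.

Lemma BB_limsup0 a P m :
  (\sum_(p <oo | p \in P) ((p%:R : R)^-1)%:E < +oo)%E ->
  leb (lim_sup_set (BB a P m)) = 0%E.
Proof.
move=> hsum; apply: lim_sup_set_cvg0; first by move=> k; apply: BB_meas.
have -> : (\sum_(p <oo) leb (BB a P m p) = \sum_(p <oo | p \in P) leb (BB a P m p))%E.
  rewrite [RHS]eseries_mkcond; apply: eq_eseriesr => p _.
  by rewrite /BB; case: ifP => // _; rewrite measure0.
apply: (@le_lt_trans _ _ (\sum_(p <oo | p \in P) ((24 * m.+1%:R)%:E * ((p%:R : R)^-1)%:E))%E).
  apply: lee_nneseries => [i _ _|n nP]; first exact: measure_ge0.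
  by rewrite -EFinM; apply: BB_mu.
rewrite nneseriesZl => [|i _]; last by rewrite lee_fin invr_ge0 ler0n.
by apply: lte_mul_pinfty => //; rewrite lee_fin mulr_ge0 ?ler0n.
Qed.

Lemma torus_y (x y : R) : (x, y) \in @torus R -> 0 <= y < 1.
Proof. by rewrite inE /torus => -[_ /=]; rewrite in_itv. Qed.

Lemma not_ball {c r y : R} : ~ ball c r y -> r <= `|y - c|.
Proof. by rewrite -ball_normE /= distrC leNgt => /negP. Qed.

Lemma good_point a (ha : forall p, prime p -> (a p < p)%N) (P : set nat)
  (hP : P `<=` primes_set) (x y : R) :
  ~ (\bigcup_m lim_sup_set (BB a P m)) y -> (x, y) \in @torus R ->
  cvg_along P (fun p => s a p (x, y)) 0.
Proof.
move=> hy ht eps eps0.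
have hy01 := @torus_y x y ht.
pose m := Num.bound (eps^-1).
have hm : eps^-1 < m%:R by apply: archi_boundP; rewrite invr_ge0 ltW.
have [n hn] : exists n, forall j, (n <= j)%N -> ~ BB a P m j y.
  apply: contrapT => H; apply: hy; exists m => // k _; apply: contrapT => H2.
  apply: H; exists k => j kj Bj; apply: H2; exists j => //.
exists n => p pP np.
have pr : prime p := hP _ pP.
have p0 : (0 < p)%N := prime_gt0 pr.
have hB := hn p np; rewrite /BB (mem_set pP) in hB.
have h0 : ~ ball (cc a p) (rr m p) y by move=> b; apply: hB; left; left.
have h1 : ~ ball (cc a p + 1) (rr m p) y by move=> b; apply: hB; left; right.
have h2 : ~ ball (cc a p - 1) (rr m p) y by move=> b; apply: hB; right.
have pr0 : 0 < p%:R :> R by rewrite ltr0n.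
have r0 : 0 < rr m p by rewrite /rr divr_gt0 ?mulr_gt0 ?ltr0n.
have := @s_small R a p x y (rr m p) p0 (ha p pr) hy01 r0 (not_ball h0) (not_ball h1) (not_ball h2).
rewrite subr0 => hs; apply: le_lt_trans hs _.
have -> : p%:R^-1 * (2 / rr m p) = (2 * m.+1%:R)^-1 :> R.
  by rewrite /rr; field; rewrite !gt_eqF ?ltr0n.
have hm1 : eps^-1 < m.+1%:R by apply: lt_trans hm _; rewrite ltr_nat.
rewrite -(ltr_pM2l eps0) mulfV ?gt_eqF // in hm1.
rewrite -[X in X < _]div1r ltr_pdivrMr ?mulr_gt0 ?ltr0n //.
have : 0 <= eps * m.+1%:R by rewrite mulr_ge0 ?ler0n // ltW.
nra.
Qed.

Lemma main2 a (ha : forall p, prime p -> (a p < p)%N) (P : set nat)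
  (hP : P `<=` primes_set)
  (hsum : (\sum_(p <oo | p \in P) ((p%:R : R)^-1)%:E < +oo)%E) :
  {ae @mu2 R, forall z : R * R, z \in @torus R -> cvg_along P (fun p => s a p z) 0}.
Proof.
set N := \bigcup_m lim_sup_set (BB a P m).
have mN : measurable N.
  apply: bigcupT_measurable => m; apply: bigcapT_measurable => n.
  by apply: bigcup_measurable => k _; exact: BB_meas.
have N0 : leb N = 0%E.
  apply/negligibleP => //; apply: negligible_bigcup => m.
  apply/negligibleP; last exact: BB_limsup0.
  apply: bigcapT_measurable => n.
  by apply: bigcup_measurable => k _; exact: BB_meas.
exists (setT `*` N); split.
- exact: measurableX.
- rewrite /mu2 product_measure1E //.
  by move: N0 => /= ->; rewrite mule0.
- move=> [x y] /= H; split => //; apply: contrapT => Hy; apply: H => ht.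
  exact: good_point.
Qed.

End Meas.

Lemma inf_big (A : set nat) : infinite_set A -> forall N, exists p, A p /\ (N <= p)%N.
Proof.
move=> inf N; apply: contrapT => H; apply: inf.
apply: (sub_finite_set _ (finite_II N)) => p Ap /=.
rewrite ltnNge; apply/negP => Np; apply: H; by exists p; split.
Qed.

Fixpoint qq (k : nat) : nat :=
  if k is k'.+1 then s2val (prime_above (2 * qq k')) else 2.

Lemma qq_prime k : prime (qq k).
Proof. by case: k => [|k] //=; case: prime_above. Qed.

Lemma qq_lt k : (2 * qq k < qq k.+1)%N.
Proof. by rewrite /=; case: prime_above. Qed.

Lemma qq_ge k : (2 ^ k.+1 <= qq k)%N.
Proof.
elim: k => [|k IH] //; apply: ltnW; apply: leq_ltn_trans (qq_lt k).
by rewrite expnS leq_mul2l IH orbT.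
Qed.

Lemma qq_inj : injective qq.
Proof.
have hom : {homo qq : i j / (i < j)%N}.
  apply: homo_ltn; first exact: ltn_trans.
  move=> i; apply: leq_ltn_trans (qq_lt i); rewrite leq_pmull //.
move=> i j e; case: (ltngtP i j) => // /hom; rewrite e ltnn //.
Qed.

Definition P0 : set nat := [set qq k | k in setT].

Lemma P0_prime : P0 `<=` primes_set.
Proof. by move=> _ [k _ <-]; apply: qq_prime. Qed.

Lemma P0_inf : infinite_set P0.
Proof.
move=> fin; apply: infinite_nat.
have := @inj_card_eq _ _ setT qq (fun x y _ _ => @qq_inj x y).
rewrite card_eq_le => /andP[_ h]; exact: card_le_finite h fin.
Qed.

Lemma P0_sum (R : realType) : (\sum_(p <oo | p \in P0) ((p%:R : R)^-1)%:E < +oo)%E.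
Proof.
rewrite nneseries_esum; last by move=> n _; rewrite lee_fin invr_ge0 ler0n.
rewrite set_mem_set esum_set_image; last 2 first.
  by move=> n _; rewrite lee_fin invr_ge0 ler0n.
  by move=> x y _ _; apply: qq_inj.
rewrite (eq_eseriesl (Q:=xpredT)); last by move=> i; rewrite in_setT.
have hg := @cvg_geometric_eseries_half R 1 0.
rewrite expr0 divr1 in hg.
apply: (@le_lt_trans _ _ (\sum_(k <oo) ((1 / ((2 ^ (k + 1))%N)%:R)%:E : \bar R))%E).
  apply: lee_nneseries => [i _ _|n _]; first by rewrite lee_fin invr_ge0 ler0n.
  rewrite lee_fin div1r lef_pV2 ?posrE ?ltr0n ?expn_gt0 ?prime_gt0 ?qq_prime //.
  by rewrite ler_nat addn1 qq_ge.
by rewrite (cvg_lim _ hg) // ltry.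
Qed.

Lemma sum_inv_from_ln (R : realType) (P : set nat) : P `<=` primes_set ->
  (\sum_(p <oo | p \in P) ((ln (p%:R : R) / p%:R)%:E) < +oo)%E ->
  (\sum_(p <oo | p \in P) ((p%:R : R)^-1)%:E < +oo)%E.
Proof.
move=> hP hs.
have l2 : 0 < ln (2 : R) by apply: ln_gt0; lra.
apply: (@le_lt_trans _ _ (\sum_(p <oo | p \in P) (((ln (2:R))^-1)%:E * (ln (p%:R : R) / p%:R)%:E))%E)%E.
  apply: lee_nneseries => [i _ _|n nP]; first by rewrite lee_fin invr_ge0 ler0n.
  have pr : prime n := hP _ (set_mem nP).
  have n2 : (2 <= n)%N := prime_gt1 pr.
  have nr : 0 < n%:R :> R by rewrite ltr0n (leq_trans _ n2).
  rewrite -EFinM lee_fin.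
  have h : ln (2 : R) <= ln n%:R.
    by rewrite ler_ln ?posrE ?ltr0n ?(leq_trans _ n2) // ler_nat.
  have -> : (ln 2)^-1 * (ln n%:R / n%:R) = n%:R^-1 * (ln n%:R / ln 2) :> R.
    by field; rewrite !gt_eqF.
  rewrite -[X in X <= _]mulr1; apply: ler_wpM2l; first by rewrite invr_ge0 ltW.
  by rewrite -(ler_pM2r l2) mul1r mulfVK ?gt_eqF.
rewrite nneseriesZl => [|i iP]; last first.
  have pr : prime i := hP _ (set_mem iP).
  by rewrite lee_fin divr_ge0 ?ler0n // ln_ge0 // ler1n prime_gt0.
by apply: lte_mul_pinfty => //; rewrite lee_fin invr_ge0 ltW.
Qed.

Lemma lift_ae (R : realType) (Q : R -> Prop) :
  {ae (@lebesgue_measure R), forall y, Q y} -> {ae @mu2 R, forall z : R * R, Q z.2}.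
Proof.
move=> [N [mN N0 sub]].
exists (setT `*` N); split.
- exact: measurableX.
- rewrite /mu2 product_measure1E //.
  by move: N0 => /= ->; rewrite mule0.
- by move=> [x y] /= H; split => //; apply: sub.
Qed.

Lemma torus_mu (R : realType) : @mu2 R (@torus R) = 1%E.
Proof.
have h : (@lebesgue_measure R `[0%R, 1%R[%classic = 1)%E.
  by rewrite lebesgue_measure_itv /= lte_fin ltr01 -EFinB subr0.
rewrite /mu2 /torus product_measure1E //.
rewrite [X in (X * _)%E](_ : _ = 1%E); last exact: h.
rewrite [X in (_ * X)%E](_ : _ = 1%E); last exact: h.
by rewrite mule1.
Qed.

Lemma normc_tri (R : realType) (u v : R[i]) :
  ComplexField.Normc.normc u <= ComplexField.Normc.normc (u - v) + ComplexField.Normc.normc v.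
Proof. by rewrite -{1}(subrK v u); apply: le_normcD. Qed.

Lemma normc_symm (R : realType) (u v : R[i]) :
  ComplexField.Normc.normc (u - v) = ComplexField.Normc.normc (v - u).
Proof. by rewrite -opprB normcN. Qed.

Lemma contra_point (R : realType) (a : nat -> nat) (z : R * R) :
  z \in @torus R ->
  converges_along primes_set (fun p => s a p z) ->
  cvg_along P0 (fun p => s a p z) 0 ->
  (z.2 \in `[0, 1] -> infinite_set [set p : nat | prime p /\
               `|z.2 - (a p)%:R / p%:R| <= (2 * p%:R)^-1]) -> False.
Proof.
case: z => x y /=.
move=> zt [l hl] h0 hinf.
have := @torus_y R x y zt => /andP[y0 y1].
have yin : (x, y).2 \in `[0, 1] by rewrite /= in_itv /= y0 ltW.
have e0 : 0 < 32^-1 :> R by rewrite invr_gt0.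
have [N1 hN1] := hl _ e0.
have [N2 hN2] := h0 _ e0.
have [p [pP pN]] := @inf_big _ P0_inf (maxn N1 N2).
have h1 := hN1 p (P0_prime _ pP) (leq_trans (leq_maxl _ _) pN).
have h2 := hN2 p pP (leq_trans (leq_maxr _ _) pN).
have [q [[qpr qb] qN]] := @inf_big _ (hinf yin) N1.
have h3 := hN1 q qpr qN.
have h4 := @s_big R a q x y (prime_gt0 qpr) qb.
rewrite subr0 in h2.
have t1 := @normc_tri R (s a q (x, y)) l.
have t2 := @normc_tri R l (s a p (x, y)).
rewrite normc_symm in t2.
lra.
Qed.

Theorem proposition4p1 (R : realType) (a : nat -> nat)
  (ha : forall p : nat, prime p -> (a p < p)%N)
  (hdir : {ae (@lebesgue_measure R), forall y : R, y \in `[0, 1] ->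
            infinite_set [set p : nat | prime p /\
               `|y - (a p)%:R / p%:R| <= (2 * p%:R)^-1]}) :
  (~ {ae @mu2 R, forall z : R * R, z \in @torus R ->
        converges_along primes_set (fun p => s a p z)})
  /\
  (forall P : set nat, P `<=` primes_set -> infinite_set P ->
     (\sum_(p <oo | p \in P) ((ln (p%:R : R) / p%:R)%:E) < +oo)%E ->
     {ae @mu2 R, forall z : R * R, z \in @torus R ->
        cvg_along P (fun p => s a p z) 0}).
Proof.
split; last first.
  move=> P hP _ hs; exact: (@main2 R a ha P hP (@sum_inv_from_ln R P hP hs)).
move=> H.
have H2 := @main2 R a ha P0 P0_prime (P0_sum R).
have H3 := @lift_ae R _ hdir.
rewrite /mu2 in H H2 H3.
have Hbad : {ae @mu2 R, forall z : R * R, ~ (z \in @torus R)}.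
  have F := @ae_filter_ringOfSetsType _ _ R (lebesgue_measure \x lebesgue_measure)%E.
  near=> z => zt.
  apply: (@contra_point R a z zt).
  - exact: (near H z).
  - exact: (near H2 z).
  - exact: (near H3 z).
have [A [mA A0 sub]] := Hbad.
have : (@mu2 R (@torus R) <= @mu2 R A)%E.
  apply: le_measure; rewrite ?inE //.
  - apply: measurableX; exact: measurable_itv.
  - move=> z zt; apply: sub => /= /(_ (mem_set zt)); done.
rewrite torus_mu A0 lee_fin; lra.
Unshelve. all: by end_near.
Qed.
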